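(* Let $g_1:L_s\to[0,1]$ and $g_2:L_r\to[0,1]$ (with $s,r\ge2$ integers) be continuous encodings of $[0,1]$ with zero redundancy, and write $\Delta^{g_1}_{\alpha_1\alpha_2\dots}=g_1((\alpha_n))$, $\Delta^{g_2}_{\beta_1\beta_2\dots}=g_2((\beta_n))$. For each $n\ge1$ let $\varphi_n:A_s^n\to A_r$ be a function, and consider the rule $$\psi\big(x=\Delta^{g_1}_{\alpha_1\alpha_2\dots\alpha_n\dots}\big)=\Delta^{g_2}_{\beta_1\beta_2\dots\beta_n\dots},\qquad \beta_n=\varphi_n(\alpha_1,\dots,\alpha_n).$$ Then $\psi$ is (defined and) continuous at every point of $[0,1]$ if and only if $\psi$ is well defined at every $g_1$-binary point, i.e. for every $g_1$-binary point $x$ the two $g_1$-codes of $x$ yield the same value of the right-hand side.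
   Context: $A_s=\{0,1,\dots,s-1\}$ and $L_s=A_s\times A_s\times\cdots$ is the space of sequences over $A_s$ (similarly $A_r$, $L_r$). An encoding of $[0,1]$ with alphabet $A_s$ is a surjective map $g:L_s\to[0,1]$; if $g((\alpha_n))=x$, $(\alpha_n)$ is a $g$-code of $x$. The $g$-cylinder of rank $m$ with base $c_1\dots c_m$ is $\Delta^g_{c_1\dots c_m}=\{g((c_1,\dots,c_m,\alpha_1,\alpha_2,\dots)):(\alpha_n)\in L_s\}$. The encoding has zero redundancy if every point has at most two $g$-codes and the set of points with two $g$-codes is at most countable; points with two codes are $g$-binary, points with one code are $g$-unary. The encoding is continuous if every $g$-cylinder is an interval and any two distinct cylinders of the same rank have no common interior points. *)

(* Defs.v *)
From HB Require Import structures.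
From mathcomp Require Import all_boot all_order all_algebra.
From mathcomp Require Import all_classical all_reals all_analysis.
Set Implicit Arguments. Unset Strict Implicit. Unset Printing Implicit Defensive.
Import Order.TTheory GRing.Theory Num.Theory.
Import numFieldNormedType.Exports.
Local Open Scope classical_set_scope.
Local Open Scope ring_scope.

(* L_s : sequences over A_s = {0,...,s-1}; index 0 is the first digit alpha_1 *)
Definition Lseq (s : nat) := nat -> 'I_s.

Definition prepend (s : nat) (c : seq 'I_s) (a : Lseq s) : Lseq s :=
  fun n => if (n < size c)%N then nth (a 0%N) c n else a (n - size c)%N.

Definition cylinder (R : realType) (s : nat) (g : Lseq s -> R) (c : seq 'I_s)
  : set R := [set g (prepend c a) | a in [set: Lseq s]].

Definition encoding (R : realType) (s : nat) (g : Lseq s -> R) : Prop :=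
  (forall a, 0 <= g a <= 1) /\ (forall x : R, 0 <= x <= 1 -> exists a, g a = x).

Definition g_binary (R : realType) (s : nat) (g : Lseq s -> R) (x : R) : Prop :=
  exists a b, a <> b /\ g a = x /\ g b = x.

Definition zero_redundancy (R : realType) (s : nat) (g : Lseq s -> R) : Prop :=
  (forall a b c, g a = g b -> g b = g c -> a = b \/ a = c \/ b = c) /\
  countable [set x | g_binary g x].

Definition continuous_encoding (R : realType) (s : nat) (g : Lseq s -> R) : Prop :=
  (forall c : seq 'I_s, is_interval (cylinder g c)) /\
  (forall c c' : seq 'I_s, size c = size c' -> c <> c' ->
     (cylinder g c)° `&` (cylinder g c')° = set0).

Definition digit_map (s r : nat)
  (phi : forall n : nat, n.+1.-tuple 'I_s -> 'I_r) (a : Lseq s) : Lseq r :=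
  fun n => phi n [tuple a (val i) | i < n.+1].

(* Main.v *)
Require Import Defs.
From HB Require Import structures.
From mathcomp Require Import all_boot all_order all_algebra.
From mathcomp Require Import all_classical all_reals all_analysis.
From mathcomp Require Import lra.
From Stdlib Require Import Classical.
Import Order.TTheory GRing.Theory Num.Theory.
Import numFieldNormedType.Exports.
Local Open Scope classical_set_scope.
Local Open Scope ring_scope.

Lemma fin_unif (R : realType) (I : finType) (x : R) (Q : I -> R -> Prop) :
  (forall j, exists2 d, 0 < d & forall y, `|x - y| < d -> Q j y) ->
  exists2 d, 0 < d & forall j y, `|x - y| < d -> Q j y.
Proof.
move=> H.
suff: forall l : seq I, exists2 d, 0 < d & forall j, j \in l -> forall y, `|x - y| < d -> Q j y.
  by case/(_ (enum I)) => d d0 Hd; exists d => // j y; apply: Hd; rewrite mem_enum.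
elim=> [|j l [d1 d10 H1]]; first by exists 1.
have [d2 d20 H2] := H j.
exists (Num.min d1 d2); first by rewrite lt_min d10 d20.
move=> k; rewrite inE => /orP [/eqP -> | kl] y; rewrite lt_min => /andP [h1 h2].
  exact: H2.
exact: H1.
Qed.

Section Gen.
Variables (R : realType) (s : nat) (g : Lseq s -> R).
Hypothesis Z3 : forall a b c, g a = g b -> g b = g c -> a = b \/ a = c \/ b = c.
Hypothesis Hint : forall c : seq 'I_s, is_interval (cylinder g c).

Definition agree (a b : Lseq s) N := forall i, (i < N)%N -> a i = b i.
Definition Cyl (a : Lseq s) N : set R := [set y | exists b, agree a b N /\ g b = y].

Lemma diff_ex (a b : Lseq s) : a <> b -> exists k, a k <> b k.
Proof.
move=> ne; apply: NNPP => h; apply: ne; apply: funext => k.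
by apply: NNPP => h'; apply: h; exists k.
Qed.

Lemma cyl_mkseq a N : cylinder g (mkseq a N) = Cyl a N.
Proof.
apply/seteqP; split => y.
  case=> t _ <-; exists (prepend (mkseq a N) t); split => //.
  by move=> i hi; rewrite /prepend size_mkseq hi nth_mkseq.
case=> b [ag <-]; exists (fun n => b (n + N)%N) => //.
congr g; apply: funext => n; rewrite /prepend size_mkseq.
case: ltnP => hn; first by rewrite nth_mkseq // ag.
by rewrite subnK.
Qed.

Lemma cyl_int a N : is_interval (Cyl a N).
Proof. rewrite -cyl_mkseq; exact: Hint. Qed.

Lemma cyl_nest a N M y : (N <= M)%N -> Cyl a M y -> Cyl a N y.
Proof.
move=> le [b [ag <-]]; exists b; split => // i hi; apply: ag.
exact: leq_trans hi le.
Qed.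

Lemma cyl_self a N : Cyl a N (g a).
Proof. by exists a. Qed.

Lemma A1 a y : (forall N, Cyl a N y) -> y = g a.
Proof.
move=> H; apply: NNPP => ne.
have [b0 [_ gb0]] := H 0%N.
have [k0 hk0] : exists k, b0 k <> a k.
  by apply: diff_ex => e; apply: ne; rewrite -gb0 e.
have [b1 [ag1 gb1]] := H k0.+1.
have [k1 hk1] : exists k, b1 k <> a k.
  by apply: diff_ex => e; apply: ne; rewrite -gb1 e.
have [b2 [ag2 gb2]] := H (maxn k0 k1).+1.
have e1 : b1 k0 = a k0 by rewrite ag1.
have e20 : b2 k0 = a k0 by rewrite ag2 // ltnS leq_maxl.
have e21 : b2 k1 = a k1 by rewrite ag2 // ltnS leq_maxr.
case: (@Z3 b0 b1 b2); first by rewrite gb0 gb1.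
  by rewrite gb1 gb2.
  by move=> e; apply: hk0; rewrite e.
case=> e.
  by apply: hk0; rewrite e.
by apply: hk1; rewrite e.
Qed.

Lemma A2 a e : 0 < e -> exists N, forall b, agree a b N -> `|g a - g b| < e.
Proof.
move=> e0; apply: NNPP => H0.
have H1 : forall N, exists b, agree a b N /\ e <= `|g a - g b|.
  move=> N; apply: NNPP => h; apply: H0; exists N => b ag.
  rewrite ltNge; apply/negP => le; apply: h; by exists b.
pose yp := g a + e / 2; pose ym := g a - e / 2.
have key : forall N, Cyl a N yp \/ Cyl a N ym.
  move=> N; have [b [ag le]] := H1 N.
  have Cb : Cyl a N (g b) by exists b.
  case: (lerP (g a) (g b)) => hab.
    left; apply: (@cyl_int a N _ _ (cyl_self a N) Cb).
    move: le; rewrite ler0_norm; last by lra.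
    by move=> le; apply/andP; split; rewrite /yp; lra.
  right; apply: (@cyl_int a N _ _ Cb (cyl_self a N)).
  move: le; rewrite ger0_norm; last by lra.
  by move=> le; apply/andP; split; rewrite /ym; lra.
case: (classic (forall N, Cyl a N yp)) => hp.
  by move: (@A1 _ _ hp); rewrite /yp => h; lra.
have [N0 hN0] := not_all_ex_not _ _ hp.
have hm : forall N, Cyl a N ym.
  move=> N; case: (key (maxn N N0)) => h.
    by exfalso; apply: hN0; apply: cyl_nest h; rewrite leq_maxr.
  by apply: cyl_nest h; rewrite leq_maxl.
by move: (@A1 _ _ hm); rewrite /ym => h; lra.
Qed.

Definition cl (x : R) a N := forall d, 0 < d -> exists y, Cyl a N y /\ `|x - y| < d.
Definition upd (a : Lseq s) N j : Lseq s := fun i => if i == N then j else a i.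

Lemma step x a N : cl x a N -> exists j, cl x (upd a N j) N.+1.
Proof.
move=> h; apply: NNPP => hn.
have H : forall j, exists2 d, 0 < d & forall y, `|x - y| < d -> ~ Cyl (upd a N j) N.+1 y.
  move=> j; apply: NNPP => h2; apply: hn; exists j => d d0.
  apply: NNPP => h3; apply: h2; exists d => // y hy hc; apply: h3; exists y; by split.
have [d d0 Hd] := @fin_unif _ _ _ _ H.
have [y [[b [ag <-]] hy]] := h d d0.
apply: (Hd (b N) (g b) hy); exists b; split => // i.
rewrite ltnS leq_eqVlt; case/orP => [/eqP -> | hi]; first by rewrite /upd eqxx.
by rewrite /upd (ltn_eqF hi) ag.
Qed.

Lemma kon x a N : cl x a N -> Cyl a N x.
Proof.
move=> h.
have F : forall (p : Lseq s * nat), exists j, cl x p.1 p.2 -> cl x (upd p.1 p.2 j) p.2.+1.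
  move=> [a' N'] /=; case: (classic (cl x a' N')) => c.
    by have [j hj] := @step _ _ _ c; exists j.
  by exists (a 0%N).
have [f Hf] := boolp.choice F.
pose A := fix A (k : nat) : Lseq s :=
  if k is k'.+1 then upd (A k') (N + k') (f (A k', (N + k')%N)) else a.
have hA : forall k, cl x (A k) (N + k).
  elim=> [|k IH]; first by rewrite addn0.
  by rewrite addnS; apply: (Hf (A k, (N + k)%N)).
have stab : forall n k, agree (A n) (A (n + k)%N) (N + n).
  move=> n; elim=> [|k IH]; first by rewrite addn0.
  move=> i hi; rewrite addnS /= /upd IH //.
  suff -> : (i == N + (n + k))%N = false by [].
  apply: ltn_eqF; apply: (leq_trans hi); rewrite leq_add2l; exact: leq_addr.
pose d := fun i => A i.+1 i.
have agd : forall k, agree (A k) d (N + k).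
  move=> k i hi; rewrite /d.
  rewrite (stab k i.+1 i hi) [(k + i.+1)%N]addnC.
  rewrite -(stab i.+1 k i) //.
  by rewrite addnS ltnS leq_addl.
have xd : x = g d.
  apply: NNPP => ne.
  have e0 : 0 < `|x - g d| / 2.
    by rewrite divr_gt0 // normr_gt0 subr_eq0; apply/eqP.
  have [N' HN'] := @A2 d _ e0.
  have [y [[b [ag <-]] hy]] := hA N' _ e0.
  have agb : agree d b N'.
    move=> i hi; rewrite -(agd N' i); last by apply: leq_trans hi (leq_addl _ _).
    by apply: ag; apply: leq_trans hi (leq_addl _ _).
  have h2 := HN' b agb.
  have := ler_distD (g b) x (g d).
  rewrite (distrC (g b)) => h3.
  set z := `|x - g d| in e0 h3 hy h2; lra.
exists d; split => //; by move: (agd 0%N); rewrite addn0.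
Qed.

Lemma closed_cyl x a N : ~ Cyl a N x ->
  exists2 d, 0 < d & forall y, `|x - y| < d -> ~ Cyl a N y.
Proof.
move=> nc; apply: NNPP => h; apply: nc; apply: kon => d d0; apply: NNPP => h2.
apply: h; exists d => // y hy hc; apply: h2; exists y; by split.
Qed.

Lemma factC x N (surj : forall y, 0 <= y <= 1 -> exists b, g b = y) (a : Lseq s) :
  g a = x ->
  exists2 d, 0 < d & forall y, 0 <= y <= 1 -> `|x - y| < d ->
    exists b t, g b = y /\ g t = x /\ agree t b N.
Proof.
move=> ga.
pose ext (c : {ffun 'I_N -> 'I_s}) : Lseq s :=
  fun i => if (insub i : option 'I_N) is Some k then c k else a 0%N.
have H : forall c, exists2 d, 0 < d & forall y, `|x - y| < d -> Cyl (ext c) N y -> Cyl (ext c) N x.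
  move=> c; case: (classic (Cyl (ext c) N x)) => hc; first by exists 1.
  have [d d0 Hd] := @closed_cyl _ _ _ hc; exists d => // y hy hy'; by case: (Hd y hy).
have [d d0 Hd] := @fin_unif _ _ _ _ H.
exists d => // y y01 hy.
have [b gb] := surj _ y01.
pose c := [ffun k : 'I_N => b (val k)].
have agc : agree (ext c) b N.
  by move=> i hi; rewrite /ext insubT /= ffunE.
have [t [agt gt]] := Hd c y hy (ex_intro _ b (conj agc gb)).
exists b, t; split => //; split => // i hi; by rewrite -agt // agc.
Qed.

End Gen.
Arguments agree {s}.

Theorem theorem1 (R : realType) (s r : nat) (hs : (2 <= s)%N) (hr : (2 <= r)%N)
  (g1 : Lseq s -> R) (g2 : Lseq r -> R)
  (enc1 : encoding g1) (zr1 : zero_redundancy g1) (ce1 : continuous_encoding g1)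
  (enc2 : encoding g2) (zr2 : zero_redundancy g2) (ce2 : continuous_encoding g2)
  (phi : forall n : nat, n.+1.-tuple 'I_s -> 'I_r) :
  (exists psi : R -> R,
      (forall a : Lseq s, psi (g1 a) = g2 (digit_map phi a)) /\
      {within `[0, 1], continuous psi})
  <->
  (forall x : R, g_binary g1 x ->
     forall a b : Lseq s, g1 a = x -> g1 b = x ->
       g2 (digit_map phi a) = g2 (digit_map phi b)).
Proof.
have Z1 := zr1.1; have I1 := ce1.1; have Z2 := zr2.1; have I2 := ce2.1.
split.
  case=> psi [Hpsi _] x _ a b ga gb.
  by rewrite -!Hpsi ga gb.
move=> H.
have WD : forall a b, g1 a = g1 b -> g2 (digit_map phi a) = g2 (digit_map phi b).
  move=> a b e; case: (classic (a = b)) => [-> //|ne].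
  by apply: (H (g1 a)) => //; exists a, b.
pose psi y := if pselect (exists a, g1 a = y) is left h
  then g2 (digit_map phi (proj1_sig (cid h))) else 0.
have Hpsi : forall a, psi (g1 a) = g2 (digit_map phi a).
  move=> a; rewrite /psi; case: pselect => [h|h]; last by exfalso; apply: h; exists a.
  apply: WD; exact: (proj2_sig (cid h)).
exists psi; split => //.
apply/subspace_continuousP => x Ax.
have x01 : 0 <= x <= 1 by move: Ax; rewrite /= in_itv.
have [a ga] := enc1.2 x x01.
apply/cvgrPdist_lt => e e0.
have dmag : forall a b N, agree a b N -> agree (digit_map phi a) (digit_map phi b) N.
  move=> a' b' N ag n hn; rewrite /digit_map; congr phi; apply: eq_mktuple => i.
  by apply: ag; exact: leq_trans (ltn_ord i) hn.
have [N HN] : exists N, forall t b, g1 t = x -> agree t b N ->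
    `|psi x - g2 (digit_map phi b)| < e.
  have [Na HNa] := @A2 _ _ _ Z2 I2 (digit_map phi a) _ e0.
  case: (classic (exists a', a' <> a /\ g1 a' = x)) => [[a' [ne ga']]|no].
    have [Nb HNb] := @A2 _ _ _ Z2 I2 (digit_map phi a') _ e0.
    exists (maxn Na Nb) => t b gt ag.
    have : t = a \/ t = a'.
      case: (Z1 t a a'); first by rewrite gt ga.
        by rewrite ga ga'.
        by left.
      case=> [->|e']; [by right|by exfalso; apply: ne].
    case=> ?; subst t.
      rewrite -ga Hpsi; apply: HNa; apply: dmag => i hi; apply: ag.
      exact: leq_trans hi (leq_maxl _ _).
    rewrite -ga' Hpsi; apply: HNb; apply: dmag => i hi; apply: ag.
    exact: leq_trans hi (leq_maxr _ _).
  exists Na => t b gt ag.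
  have ta : t = a.
    apply: NNPP => nt; apply: no; exists t; split => //.
  move: ag; rewrite ta => ag.
  rewrite -ga Hpsi; apply: HNa; exact: dmag.
have [d d0 Hd] := @factC _ _ _ Z1 I1 x N enc1.2 a ga.
rewrite near_withinE; apply/nbhs_ballP; exists d => //= y hy Ay.
have y01 : 0 <= y <= 1 by move: Ay; rewrite /= in_itv.
have [b [t [gb [gt ag]]]] := Hd y y01 hy.
by rewrite /from_subspace -gb Hpsi; exact: HN t b gt ag.
Qed.
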